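(* Let $m\in\mathbb{N}$, $\alpha\in[0,1]$, and let $V$ be a 1-periodic complex-valued distribution with $V\in H_{+}^{-m\alpha}$. Let $S_{\pm}(V)=D_{\pm}^{2m}\dotplus V(x)$ be the form-sum operators on $L_2(0,1)$, i.e. the $m$-sectorial operators associated with the closed sectorial forms $t_\pm[u,v]=\langle D_{\pm}^{2m}u,v\rangle_{\pm}+\langle V(x)u,v\rangle_{\pm}$, $\mathrm{Dom}(t_\pm)=H_\pm^m$; equivalently $\mathrm{Dom}(S_{\pm})=\{u\in H_{\pm}^{m}\mid D_{\pm}^{2m}u+V(x)u\in L_{2}(0,1)\}$, $S_\pm(V)u=D_{\pm}^{2m}u+V(x)u$. Then $$\mathrm{Dom}(S_{\pm})\subseteq H_{\pm}^{m(2-\alpha)}.$$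
   Context: For $s\in\mathbb{R}$, $H_{+}^{s}$ is the space of formal series $f=\sum_{k\in\mathbb{Z}}\widehat f(2k)e^{i2k\pi x}$ with $\|f\|_{H_+^s}^2=\sum_k\langle 2k\rangle^{2s}|\widehat f(2k)|^2<\infty$, and $H_{-}^{s}$ is the space of formal series $f=\sum_{k}\widehat f(2k+1)e^{i(2k+1)\pi x}$ with $\|f\|_{H_-^s}^2=\sum_k\langle 2k+1\rangle^{2s}|\widehat f(2k+1)|^2<\infty$, where $\langle k\rangle=1+|k|$; $H_\pm^0=L_2(0,1)$. $\langle\cdot,\cdot\rangle_{\pm}$ is the pairing between $H_\pm^{s}$ and $H_\pm^{-s}$ extending the $L_2(0,1)$ inner product. $D_{\pm}=-i\,d/dx$ on $H_\pm^1$ and $D_\pm^{2m}=|D_\pm|^{2m}$ (multiplication by $(n\pi)^{2m}$ on the Fourier mode $e^{in\pi x}$), extended to all $H^s_\pm$. For $V\in H_+^{-m}$ and $u\in H_\pm^{m}$, $V(x)u=\sum_n\big(\sum_j\widehat V(n-j)\widehat u(j)\big)e^{in\pi x}\in H_\pm^{-m}$ is the formal product of Fourier series. Note $H_+^{-m\alpha}\subseteq H_+^{-m}$, so the operators are well defined. *)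

(* Defs.v *)
From Stdlib Require Import Reals ZArith.
From Coquelicot Require Import Coquelicot.
Open Scope R_scope.

(* A formal Fourier series sum_n f(n) e^{i n pi x}, n in Z, stored by its
   coefficient function. *)
Definition fseries := Z -> C.

(* Parity constraint: p = true  (the "+" case) : only even modes 2k,
                      p = false (the "-" case) : only odd modes 2k+1. *)
Definition parity_ok (p : bool) (f : fseries) : Prop :=
  forall n : Z, Z.even n <> p -> f n = RtoC 0.

Definition jb (n : Z) : R := 1 + Rabs (IZR n).

(* finiteness of sum_{n in Z} a n, for a nonnegative family a over Z
   (split Z into n >= 0 and n = -k-1 < 0). *)
Definition sumZ_finite (a : Z -> R) : Prop :=
  ex_series (fun k : nat => a (Z.of_nat k) + a (- Z.of_nat k - 1)%Z).

Definition H (p : bool) (s : R) (f : fseries) : Prop :=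
  parity_ok p f /\
  sumZ_finite (fun n => Rpower (jb n) (2 * s) * (Cmod (f n)) ^ 2).

(* c is the n-th Fourier coefficient of the formal product V(x)u,
   i.e. c = sum_{j in Z} V(n-j) u(j)  (j = k and j = -k-1, k in nat). *)
Definition prod_coef (V u : fseries) (n : Z) (c : C) : Prop :=
  is_series (fun k : nat =>
     Cplus (Cmult (V (n - Z.of_nat k)%Z) (u (Z.of_nat k)))
           (Cmult (V (n + Z.of_nat k + 1)%Z) (u (- Z.of_nat k - 1)%Z))) c.

Definition D2m (m : nat) (u : fseries) : fseries :=
  fun n => Cmult (RtoC ((IZR n * PI) ^ (2 * m))) (u n).

Definition dom_S (p : bool) (m : nat) (V u : fseries) : Prop :=
  H p (INR m) u /\
  exists g : fseries,
    (forall n : Z, prod_coef V u n (g n)) /\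
    H p 0 (fun n => Cplus (D2m m u n) (g n)).

(* Main.v *)
Require Import Defs.
From Stdlib Require Import Reals ZArith Lra Lia Psatz.
From Coquelicot Require Import Coquelicot.
Open Scope R_scope.

Fixpoint zs (a : Z -> R) (lo : Z) (len : nat) : R :=
  match len with O => 0 | S l => a lo + zs a (lo + 1)%Z l end.

Lemma zs_ext a b lo l : (forall n, a n = b n) -> zs a lo l = zs b lo l.
Proof. intros H; revert lo; induction l; intros lo; simpl; auto. rewrite H, IHl; auto. Qed.

Lemma zs_le a b lo l : (forall n, a n <= b n) -> zs a lo l <= zs b lo l.
Proof. intros H; revert lo; induction l; intros lo; simpl. lra. specialize (IHl (lo+1)%Z). specialize (H lo). lra. Qed.

Lemma zs_nonneg a lo l : (forall n, 0 <= a n) -> 0 <= zs a lo l.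
Proof. intros H; revert lo; induction l; intros lo; simpl. lra. specialize (IHl (lo+1)%Z). specialize (H lo). lra. Qed.

Lemma zs_plus a b lo l : zs (fun n => a n + b n) lo l = zs a lo l + zs b lo l.
Proof. revert lo; induction l; intros lo; simpl. lra. rewrite IHl; lra. Qed.

Lemma zs_scal c a lo l : zs (fun n => c * a n) lo l = c * zs a lo l.
Proof. revert lo; induction l; intros lo; simpl. lra. rewrite IHl; lra. Qed.

Lemma zs_app a lo l1 l2 : zs a lo (l1 + l2) = zs a lo l1 + zs a (lo + Z.of_nat l1) l2.
Proof.
  revert lo; induction l1; intros lo; simpl.
  - replace (lo + 0)%Z with lo by lia. lra.
  - rewrite IHl1. rewrite Rplus_assoc. f_equal. f_equal. f_equal. lia.
Qed.

Lemma zs_shift a c lo l : zs (fun n => a (n + c)%Z) lo l = zs a (lo + c) l.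
Proof. revert lo; induction l; intros lo; simpl. lra. rewrite IHl. f_equal. f_equal. lia. Qed.

Lemma zs_swap (f : Z -> Z -> R) lo1 l1 lo2 l2 :
  zs (fun n => zs (fun j => f n j) lo2 l2) lo1 l1 = zs (fun j => zs (fun n => f n j) lo1 l1) lo2 l2.
Proof.
  revert lo1; induction l1; intros lo1; simpl.
  - clear. revert lo2; induction l2; intros; simpl; auto. rewrite <- IHl2; lra.
  - rewrite IHl1. symmetry. apply (zs_plus (fun j => f lo1 j) (fun j => zs (fun n => f n j) (lo1+1)%Z l1)).
Qed.

Lemma zs_sub a lo l lo' l' : (forall n, 0 <= a n) -> (lo' <= lo)%Z -> (lo + Z.of_nat l <= lo' + Z.of_nat l')%Z ->
  zs a lo l <= zs a lo' l'.
Proof.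
  intros Ha H1 H2.
  set (d1 := Z.to_nat (lo - lo')). set (d2 := (l' - d1 - l)%nat).
  assert (E : l' = (d1 + (l + d2))%nat) by (unfold d2, d1; lia).
  rewrite E, zs_app, zs_app.
  replace (lo' + Z.of_nat d1)%Z with lo by (unfold d1; lia).
  pose proof (zs_nonneg a lo' d1 Ha). pose proof (zs_nonneg a (lo + Z.of_nat l) d2 Ha). lra.
Qed.

Lemma zs_last a lo l : zs a lo (S l) = zs a lo l + a (lo + Z.of_nat l)%Z.
Proof.
  replace (S l) with (l + 1)%nat by lia. rewrite zs_app. simpl. lra.
Qed.

Lemma pair_zs a N : sum_n (fun k => a (Z.of_nat k) + a (- Z.of_nat k - 1)%Z) N
  = zs a (- Z.of_nat N - 1) (2 * N + 2).
Proof.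
  induction N.
  - rewrite sum_O. simpl. lra.
  - rewrite sum_Sn, IHN. unfold plus. cbv beta. change (AbelianMonoid.plus _ _ ?x ?y) with (x + y).
    replace (2 * S N + 2)%nat with (S (S (2 * N + 2)))%nat by lia.
    rewrite zs_last. change (zs a (- Z.of_nat (S N) - 1) (S (2 * N + 2))) with
      (a (- Z.of_nat (S N) - 1)%Z + zs a (- Z.of_nat (S N) - 1 + 1)%Z (2 * N + 2)).
    replace (- Z.of_nat (S N) - 1 + 1)%Z with (- Z.of_nat N - 1)%Z by lia.
    replace (- Z.of_nat (S N) - 1 + Z.of_nat (S (2 * N + 2)))%Z with (Z.of_nat (S N)) by lia.
    lra.
Qed.

Lemma zs_cs x w lo l : (forall n, 0 <= w n) ->
  (zs (fun j => x j * w j) lo l) ^ 2 <= zs w lo l * zs (fun j => x j ^ 2 * w j) lo l.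
Proof.
  intros Hw; revert lo; induction l; intros lo. simpl; lra. cbn [zs].
  specialize (IHl (lo+1)%Z).
  set (S := zs (fun j => x j * w j) (lo + 1) l) in *.
  set (W := zs w (lo + 1) l) in *.
  set (Q := zs (fun j => x j ^ 2 * w j) (lo + 1) l) in *.
  assert (HW : 0 <= W) by (apply zs_nonneg; auto).
  assert (HQ : 0 <= Q) by (apply zs_nonneg; intros; specialize (Hw n); nra).
  pose proof (Hw lo) as Hwl. set (y := x lo) in *. set (v := w lo) in *.
  assert (K : 2 * S * y <= W * y ^ 2 + Q).
  { assert (P0 : 0 <= W * y ^ 2 + Q) by nra.
    assert (P1 : (2 * S * y) ^ 2 <= (W * y ^ 2 + Q) ^ 2).
    { assert (E1 : (2 * S * y) ^ 2 = 4 * y ^ 2 * S ^ 2) by ring.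
      assert (E2 : (W * y ^ 2 + Q) ^ 2 = 4 * y ^ 2 * (W * Q) + (W * y ^ 2 - Q) ^ 2) by ring.
      rewrite E1, E2. assert (0 <= y ^ 2) by apply pow2_ge_0. assert (0 <= (W * y ^ 2 - Q) ^ 2) by apply pow2_ge_0.
      assert (4 * y ^ 2 * S ^ 2 <= 4 * y ^ 2 * (W * Q)) by (apply Rmult_le_compat_l; lra). lra. }
    nra. }
  assert (K2 : v * (2 * S * y) <= v * (W * y ^ 2 + Q)) by (apply Rmult_le_compat_l; lra).
  assert (IH' : S ^ 2 <= W * Q) by exact IHl.
  assert (E : (y * v + S) ^ 2 = y ^ 2 * v ^ 2 + v * (2 * S * y) + S ^ 2) by ring.
  assert (E' : (v + W) * (y ^ 2 * v + Q) = y ^ 2 * v ^ 2 + v * (W * y ^ 2 + Q) + W * Q) by ring.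
  rewrite E, E'. lra.
Qed.

Lemma zs_amgm x y lo l : zs (fun j => x j * y j) lo l <= (zs (fun j => x j ^ 2) lo l + zs (fun j => y j ^ 2) lo l) / 2.
Proof.
  unfold Rdiv. rewrite Rmult_comm, <- zs_plus, <- zs_scal. apply zs_le. intros n. pose proof (pow2_ge_0 (x n - y n)). nra.
Qed.

Lemma sumZ_bound a : (forall n, 0 <= a n) -> sumZ_finite a -> exists C, forall lo l, zs a lo l <= C.
Proof.
  intros Ha [L HL]. exists L. intros lo l.
  set (N := (Z.abs_nat lo + l)%nat).
  apply Rle_trans with (zs a (- Z.of_nat N - 1) (2 * N + 2)).
  { apply zs_sub; auto; unfold N; lia. }
  rewrite <- pair_zs.
  apply (is_lim_seq_incr_compare (sum_n (fun k => a (Z.of_nat k) + a (- Z.of_nat k - 1)%Z))).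
  - exact HL.
  - intros n. rewrite sum_Sn. unfold plus. change (AbelianMonoid.plus _ _ ?x ?y) with (x+y). pose proof (Ha (Z.of_nat (S n))). pose proof (Ha (- Z.of_nat (S n) - 1)%Z). lra.
Qed.

Lemma bound_sumZ a C : (forall n, 0 <= a n) -> (forall N, zs a (- Z.of_nat N - 1) (2 * N + 2) <= C) -> sumZ_finite a.
Proof.
  intros Ha HC. unfold sumZ_finite.
  destruct (ex_finite_lim_seq_incr (sum_n (fun k => a (Z.of_nat k) + a (- Z.of_nat k - 1)%Z)) C) as [l Hl].
  - intros n. rewrite sum_Sn. unfold plus. change (AbelianMonoid.plus _ _ ?x ?y) with (x+y). pose proof (Ha (Z.of_nat (S n))). pose proof (Ha (- Z.of_nat (S n) - 1)%Z). lra.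
  - intros n. rewrite pair_zs. apply HC.
  - exists l. exact Hl.
Qed.

Lemma exp_mono x y : x <= y -> exp x <= exp y.
Proof. intros H. destruct (Rle_lt_or_eq_dec _ _ H) as [H'|H']. left; apply exp_increasing; auto. subst; lra. Qed.

Lemma jb_ge1 n : 1 <= jb n.
Proof. unfold jb. pose proof (Rabs_pos (IZR n)). lra. Qed.

Lemma jb_pos n : 0 < jb n.
Proof. pose proof (jb_ge1 n). lra. Qed.

Lemma jb_tri n j : jb (n - j) <= jb n + jb j.
Proof.
  unfold jb. rewrite minus_IZR. unfold Rminus.
  pose proof (Rabs_triang (IZR n) (- IZR j)). rewrite Rabs_Ropp in H. lra.
Qed.

Lemma ln_ge0 x : 1 <= x -> 0 <= ln x.
Proof. intros H. rewrite <- ln_1. apply ln_le; lra. Qed.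

Lemma key_exp (M s a b c : R) : 0 <= s <= M -> 1 <= a -> 1 <= b -> 1 <= c -> b <= a + c ->
  exp (- s * ln a + s * ln b - M * ln c) <= exp (M * ln 3 - M * ln c) + exp (M * ln 2 - M * ln a).
Proof.
  intros [Hs HM] Ha Hb Hc Hbac.
  pose proof (exp_pos (M * ln 3 - M * ln c)). pose proof (exp_pos (M * ln 2 - M * ln a)).
  assert (l3 : 0 <= ln 3) by (apply ln_ge0; lra).
  assert (l2 : 0 <= ln 2) by (apply ln_ge0; lra).
  destruct (Rle_or_lt b (3 * a)) as [H1|H1].
  - assert (E : ln b <= ln 3 + ln a). { rewrite <- ln_mult by lra. apply ln_le; lra. }
    assert (E2 : s * (ln b - ln a) <= s * ln 3) by (apply Rmult_le_compat_l; lra).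
    assert (E3 : s * ln 3 <= M * ln 3) by (apply Rmult_le_compat_r; lra).
    assert (exp (- s * ln a + s * ln b - M * ln c) <= exp (M * ln 3 - M * ln c)).
    { apply exp_mono. nra. }
    lra.
  - assert (Hca : a <= c) by lra.
    assert (E : ln b <= ln 2 + ln c). { rewrite <- ln_mult by lra. apply ln_le; lra. }
    assert (Lca : ln a <= ln c) by (apply ln_le; lra).
    assert (E2 : s * ln b <= s * (ln 2 + ln c)) by (apply Rmult_le_compat_l; lra).
    assert (E3 : s * ln 2 <= M * ln 2) by (apply Rmult_le_compat_r; lra).
    assert (E4 : (s - M) * ln c <= (s - M) * ln a) by (apply Rmult_le_compat_neg_l; lra).
    assert (exp (- s * ln a + s * ln b - M * ln c) <= exp (M * ln 2 - M * ln a)).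
    { apply exp_mono. nra. }
    lra.
Qed.

Lemma pointwise (M s La Lb Lc v x : R) : 0 <= v -> 0 <= x ->
  exp (- s * La + s * Lb - M * Lc) <= exp (M * ln 3 - M * Lc) + exp (M * ln 2 - M * La) ->
  exp (- s * La) * v * x <=
    exp (M * ln 3) * (exp (- s * Lb) * v * x)
    + exp (M * ln 2) * exp (- M * La) * ((exp (- s * Lb) * v) * (exp (M * Lc) * x)).
Proof.
  intros Hv Hx H.
  assert (P : 0 <= exp (- s * Lb) * v * (exp (M * Lc) * x)).
  { pose proof (exp_pos (- s * Lb)). pose proof (exp_pos (M * Lc)).
    apply Rmult_le_pos; [apply Rmult_le_pos|apply Rmult_le_pos]; lra. }
  assert (Q := Rmult_le_compat_r _ _ _ P H).
  assert (E1 : exp (- s * La) * v * x = exp (- s * La + s * Lb - M * Lc) * (exp (- s * Lb) * v * (exp (M * Lc) * x))).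
  { replace (- s * La) with ((- s * La + s * Lb - M * Lc) + (- s * Lb) + (M * Lc)) at 1 by ring.
    rewrite !exp_plus. ring. }
  assert (E2 : exp (M * ln 3) * (exp (- s * Lb) * v * x) = exp (M * ln 3 - M * Lc) * (exp (- s * Lb) * v * (exp (M * Lc) * x))).
  { replace (M * ln 3) with ((M * ln 3 - M * Lc) + M * Lc) at 1 by ring. rewrite exp_plus. ring. }
  assert (E3 : exp (M * ln 2) * exp (- M * La) = exp (M * ln 2 - M * La)).
  { rewrite <- exp_plus. f_equal. ring. }
  rewrite E1, E2, E3. lra.
Qed.

Lemma zs_refl a c lo l : zs (fun j => a (c - j)%Z) lo l = zs a (c - (lo + Z.of_nat l) + 1)%Z l.
Proof.
  revert lo; induction l; intros lo. reflexivity.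
  change (zs (fun j => a (c-j)%Z) lo (S l)) with (a (c - lo)%Z + zs (fun j => a (c-j)%Z) (lo+1)%Z l).
  rewrite IHl. rewrite zs_last.
  replace (c - (lo + 1 + Z.of_nat l) + 1)%Z with (c - (lo + Z.of_nat (S l)) + 1)%Z by lia.
  replace (c - (lo + Z.of_nat (S l)) + 1 + Z.of_nat l)%Z with (c - lo)%Z by lia. lra.
Qed.

Lemma zs_lim (f : nat -> Z -> R) (F : Z -> R) lo l :
  (forall n, is_lim_seq (fun J => f J n) (F n)) -> is_lim_seq (fun J => zs (f J) lo l) (zs F lo l).
Proof.
  intros H; revert lo; induction l; intros lo; simpl.
  - apply is_lim_seq_const.
  - apply is_lim_seq_plus'; auto.
Qed.

Lemma Cmod_sum_n (f : nat -> C) J : Cmod (sum_n f J) <= sum_n (fun k => Cmod (f k)) J.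
Proof.
  induction J.
  - rewrite !sum_O. lra.
  - rewrite !sum_Sn. eapply Rle_trans. apply Cmod_triangle.
    apply Rplus_le_compat; [exact IHJ | apply Rle_refl].
Qed.

Lemma series_Cmod_lim (f : nat -> C) c : is_series f c -> is_lim_seq (fun J => Cmod (sum_n f J)) (Cmod c).
Proof.
  intros H. unfold is_lim_seq.
  pose proof (filterlim_comp _ _ _ (sum_n f) norm _ _ _ H (filterlim_norm c)) as K.
  exact K.
Qed.

Lemma inv_sq_summable : sumZ_finite (fun n => / (jb n) ^ 2).
Proof.
  apply (bound_sumZ _ 4).
  - intros n. pose proof (jb_pos n). apply Rlt_le, Rinv_0_lt_compat. nra.
  - intros N. rewrite <- pair_zs.
    assert (E : forall k, / jb (Z.of_nat k) ^ 2 + / jb (- Z.of_nat k - 1)%Z ^ 2 = / (1 + INR k) ^ 2 + / (2 + INR k) ^ 2).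
    { intros k. unfold jb. rewrite <- INR_IZR_INZ.
      rewrite minus_IZR, opp_IZR, <- INR_IZR_INZ.
      pose proof (pos_INR k).
      rewrite Rabs_pos_eq by lra. rewrite Rabs_left by lra. f_equal; f_equal; f_equal; lra. }
    rewrite (sum_n_ext _ _ _ E).
    assert (G : forall N, sum_n (fun k => / (1 + INR k) ^ 2 + / (2 + INR k) ^ 2) N <= 4 - 4 / (INR N + 2)).
    { induction N0.
      - rewrite sum_O. simpl. lra.
      - rewrite sum_Sn. unfold plus. change (AbelianMonoid.plus _ _ ?x ?y) with (Rplus x y).
        rewrite S_INR. pose proof (pos_INR N0).
        assert (I1 : / (1 + (INR N0 + 1)) ^ 2 + / (2 + (INR N0 + 1)) ^ 2 <= 4 / (INR N0 + 2) - 4 / (INR N0 + 1 + 2)).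
        { set (t := INR N0) in *.
          assert (A1 : / (1 + (t + 1)) ^ 2 <= 2 * / ((t+2) * (t+3))).
          { replace (2 * / ((t+2) * (t+3))) with (/ ((t+2) * (t+3) / 2)) by (field; lra).
            apply Rinv_le_contravar. nra. nra. }
          assert (A2 : / (2 + (t + 1)) ^ 2 <= / ((t+2) * (t+3))).
          { apply Rinv_le_contravar. nra. nra. }
          assert (A3 : 4 / (t + 2) - 4 / (t + 1 + 2) = 4 * / ((t+2) * (t+3))).
          { field. lra. }
          assert (A4 : 0 < / ((t+2) * (t+3))) by (apply Rinv_0_lt_compat; nra).
          lra. }
        lra. }
    specialize (G N). pose proof (pos_INR N).
    assert (0 < 4 / (INR N + 2)) by (apply Rdiv_lt_0_compat; lra). lra.
Qed.

Definition L (n : Z) : R := ln (jb n).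

Lemma L_ge0 n : 0 <= L n.
Proof. apply ln_ge0, jb_ge1. Qed.

Lemma expL_sq_le (M : R) n : 1 <= M -> exp (- M * L n) ^ 2 <= / jb n ^ 2.
Proof.
  intros HM. pose proof (jb_pos n) as Hp.
  assert (E : jb n = exp (L n)) by (unfold L; rewrite exp_ln; auto).
  assert (K : exp (- M * L n) ^ 2 * jb n ^ 2 <= 1).
  { rewrite E. rewrite <- Rpow_mult_distr, <- exp_plus.
    replace 1 with (1 ^ 2) by ring. apply pow_incr. split. apply Rlt_le, exp_pos.
    rewrite <- exp_0. apply exp_mono. pose proof (L_ge0 n). nra. }
  assert (P : 0 < jb n ^ 2) by nra.
  apply (Rmult_le_reg_r (jb n ^ 2)); auto. rewrite Rinv_l by lra. lra.
Qed.

Lemma Cmod_term_le (V u : fseries) n k :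
  Cmod (Cplus (Cmult (V (n - Z.of_nat k)%Z) (u (Z.of_nat k)))
              (Cmult (V (n + Z.of_nat k + 1)%Z) (u (- Z.of_nat k - 1)%Z)))
  <= (fun j => Cmod (V (n - j)%Z) * Cmod (u j)) (Z.of_nat k)
     + (fun j => Cmod (V (n - j)%Z) * Cmod (u j)) (- Z.of_nat k - 1)%Z.
Proof.
  eapply Rle_trans. apply Cmod_triangle. rewrite !Cmod_mult.
  replace (n - (- Z.of_nat k - 1))%Z with (n + Z.of_nat k + 1)%Z by lia. lra.
Qed.

Section G.
Variables (m : nat) (s : R) (V u g : fseries).
Hypothesis Hm : (1 <= m)%nat.
Hypothesis Hs : 0 <= s <= INR m.
Let M := INR m.
Let A k := exp (- s * L k) * Cmod (V k).
Let B j := exp (M * L j) * Cmod (u j).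
Let w n := exp (- s * L n).
Let e n := exp (- M * L n).
Hypothesis hA : sumZ_finite (fun k => A k ^ 2).
Hypothesis hB : sumZ_finite (fun j => B j ^ 2).
Hypothesis hg : forall n, prod_coef V u n (g n).

Let C3 := exp (M * ln 3).
Let C2 := exp (M * ln 2).

Lemma A_nn k : 0 <= A k.
Proof. unfold A. pose proof (exp_pos (- s * L k)). pose proof (Cmod_ge_0 (V k)). nra. Qed.
Lemma B_nn k : 0 <= B k.
Proof. unfold B. pose proof (exp_pos (M * L k)). pose proof (Cmod_ge_0 (u k)). nra. Qed.

Lemma u_eq j : Cmod (u j) = e j * B j.
Proof. unfold e, B. rewrite <- Rmult_assoc, <- exp_plus. replace (- M * L j + M * L j) with 0 by ring. rewrite exp_0; ring. Qed.

Lemma ptw n j : w n * (Cmod (V (n - j)%Z) * Cmod (u j)) <=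
   C3 * (A (n - j)%Z * Cmod (u j)) + C2 * e n * (A (n - j)%Z * B j).
Proof.
  unfold w, A, B, e, C3, C2.
  rewrite <- Rmult_assoc.
  replace (exp (M * ln 3) * (exp (- s * L (n - j)) * Cmod (V (n - j)%Z) * Cmod (u j)))
    with (exp (M * ln 3) * (exp (- s * L (n - j)) * Cmod (V (n - j)%Z) * Cmod (u j))) by ring.
  apply pointwise; try apply Cmod_ge_0.
  unfold L. apply key_exp; auto using jb_ge1, jb_tri.
Qed.


Lemma g_weighted : sumZ_finite (fun n => (w n * Cmod (g n)) ^ 2).
Proof.
  destruct (sumZ_bound _ (fun k => pow2_ge_0 (A k)) hA) as [A2 HA2].
  destruct (sumZ_bound _ (fun k => pow2_ge_0 (B k)) hB) as [B2 HB2].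
  destruct (sumZ_bound _ (fun n => Rlt_le _ _ (Rinv_0_lt_compat _ (pow_lt _ 2 (jb_pos n)))) inv_sq_summable) as [Z2 HZ2].
  assert (HM1 : 1 <= M) by (unfold M; apply (le_INR 1); auto).
  assert (HZ : forall lo l, zs (fun j => e j ^ 2) lo l <= Z2).
  { intros lo l. eapply Rle_trans. 2: apply (HZ2 lo l). apply zs_le. intros n. unfold e. apply expL_sq_le; auto. }
  set (U1 := (Z2 + B2) / 2).
  set (Yb := (A2 + B2) / 2).
  assert (HU : forall lo l, zs (fun j => Cmod (u j)) lo l <= U1).
  { intros lo l. rewrite (zs_ext _ _ _ _ u_eq). eapply Rle_trans. apply zs_amgm.
    pose proof (HZ lo l). pose proof (HB2 lo l). unfold U1. lra. }
  assert (HAr : forall n lo l, zs (fun j => A (n - j)%Z ^ 2) lo l <= A2).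
  { intros n lo l. rewrite (zs_refl (fun k => A k ^ 2)). apply HA2. }
  assert (HAs : forall j lo l, zs (fun n => A (n - j)%Z ^ 2) lo l <= A2).
  { intros j lo l. rewrite (zs_ext _ (fun n => A (n + - j)%Z ^ 2)).
    rewrite (zs_shift (fun k => A k ^ 2)). apply HA2. intros n. f_equal. }
  set (CG := 2 * C3 ^ 2 * U1 * (A2 * U1) + 2 * C2 ^ 2 * Yb ^ 2 * Z2).
  apply (bound_sumZ _ CG). { intros n; apply pow2_ge_0. }
  intros N. set (lo := (- Z.of_nat N - 1)%Z). set (len := (2 * N + 2)%nat).
  set (term := fun n k => Cplus (Cmult (V (n - Z.of_nat k)%Z) (u (Z.of_nat k)))
           (Cmult (V (n + Z.of_nat k + 1)%Z) (u (- Z.of_nat k - 1)%Z))).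
  set (P := fun J n => sum_n (term n) J).
  assert (Hlim : is_lim_seq (fun J => zs (fun n => (w n * Cmod (P J n)) * (w n * Cmod (P J n))) lo len)
                    (zs (fun n => (w n * Cmod (g n)) ^ 2) lo len)).
  { rewrite (zs_ext (fun n => (w n * Cmod (g n)) ^ 2) (fun n => (w n * Cmod (g n)) * (w n * Cmod (g n)))) by (intros; ring).
    apply (zs_lim (fun J n => (w n * Cmod (P J n)) * (w n * Cmod (P J n)))).
    intros n. assert (Hc := series_Cmod_lim _ _ (hg n)).
    assert (Hw : is_lim_seq (fun J => w n * Cmod (P J n)) (w n * Cmod (g n))).
    { apply (is_lim_seq_scal_l _ (w n) (Cmod (g n))). exact Hc. }
    apply (is_lim_seq_mult' _ _ _ _ Hw Hw). }
  assert (Hbd : forall J, zs (fun n => (w n * Cmod (P J n)) * (w n * Cmod (P J n))) lo len <= CG).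
  { intros J. set (jlo := (- Z.of_nat J - 1)%Z). set (jl := (2 * J + 2)%nat).
    set (T := fun n => zs (fun j => Cmod (V (n - j)%Z) * Cmod (u j)) jlo jl).
    set (X := fun n => zs (fun j => A (n - j)%Z * Cmod (u j)) jlo jl).
    set (Y := fun n => zs (fun j => A (n - j)%Z * B j) jlo jl).
    set (Q := fun n => zs (fun j => A (n - j)%Z ^ 2 * Cmod (u j)) jlo jl).
    assert (HP : forall n, Cmod (P J n) <= T n).
    { intros n. unfold P. eapply Rle_trans. apply Cmod_sum_n.
      unfold T, jlo, jl. rewrite <- (pair_zs (fun j => Cmod (V (n - j)%Z) * Cmod (u j))).
      unfold sum_n. apply sum_n_m_le. intros k. unfold term. apply Cmod_term_le. }
    assert (HT : forall n, w n * T n <= C3 * X n + C2 * e n * Y n).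
    { intros n. unfold T, X, Y. rewrite <- zs_scal. eapply Rle_trans. apply zs_le. intros j. apply ptw.
      rewrite zs_plus, !zs_scal. lra. }
    assert (HY : forall n, 0 <= Y n <= Yb).
    { intros n. split. apply zs_nonneg. intros j. pose proof (A_nn (n - j)). pose proof (B_nn j). nra.
      unfold Y. eapply Rle_trans. apply zs_amgm. pose proof (HAr n jlo jl). pose proof (HB2 jlo jl). unfold Yb. lra. }
    assert (HU0 : 0 <= U1). { pose proof (HU jlo 0%nat). simpl in H. lra. }
    assert (HA0 : 0 <= A2). { pose proof (HA2 jlo 0%nat). simpl in H. lra. }
    assert (HQ0 : forall n, 0 <= Q n).
    { intros n. apply zs_nonneg. intros j. pose proof (pow2_ge_0 (A (n - j)%Z)). pose proof (Cmod_ge_0 (u j)). nra. }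
    assert (HX : forall n, X n ^ 2 <= U1 * Q n).
    { intros n. eapply Rle_trans. apply (zs_cs (fun j => A (n - j)%Z) (fun j => Cmod (u j))). intros; apply Cmod_ge_0.
      apply Rmult_le_compat_r. apply HQ0. apply HU. }
    assert (HX0 : forall n, 0 <= X n).
    { intros n. apply zs_nonneg. intros j. pose proof (A_nn (n - j)). pose proof (Cmod_ge_0 (u j)). nra. }
    assert (HC3 : 0 < C3) by apply exp_pos. assert (HC2 : 0 < C2) by apply exp_pos.
    assert (Hn : forall n, (w n * Cmod (P J n)) * (w n * Cmod (P J n)) <=
                 (2 * C3 ^ 2 * U1) * Q n + (2 * C2 ^ 2 * Yb ^ 2) * e n ^ 2).
    { intros n. set (p := w n * Cmod (P J n)).
      assert (Hp0 : 0 <= p). { unfold p. pose proof (exp_pos (- s * L n)). pose proof (Cmod_ge_0 (P J n)). unfold w. nra. }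
      assert (Hpr : p <= C3 * X n + C2 * e n * Y n).
      { eapply Rle_trans. 2: apply HT. unfold p. apply Rmult_le_compat_l. unfold w; apply Rlt_le, exp_pos. apply HP. }
      pose proof (HX n). pose proof (HY n). pose proof (HX0 n). pose proof (HQ0 n).
      assert (He : 0 < e n) by apply exp_pos.
      set (x := X n) in *. set (y := Y n) in *. set (en := e n) in *. set (q := Q n) in *.
      assert (S1 : p * p <= (C3 * x + C2 * en * y) ^ 2).
      { assert (0 <= C3 * x + C2 * en * y). { assert (0 <= C2 * en * y) by (apply Rmult_le_pos; nra). nra. } nra. }
      assert (S2 : (C3 * x + C2 * en * y) ^ 2 <= 2 * (C3 ^ 2 * x ^ 2) + 2 * (C2 ^ 2 * en ^ 2 * y ^ 2)).
      { pose proof (pow2_ge_0 (C3 * x - C2 * en * y)). nra. }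
      assert (S3 : C3 ^ 2 * x ^ 2 <= C3 ^ 2 * (U1 * q)) by (apply Rmult_le_compat_l; [apply pow2_ge_0 | lra]).
      assert (S4 : y ^ 2 <= Yb ^ 2) by (apply pow_incr; lra).
      assert (S5 : C2 ^ 2 * en ^ 2 * y ^ 2 <= C2 ^ 2 * en ^ 2 * Yb ^ 2).
      { apply Rmult_le_compat_l; auto. apply Rmult_le_pos; apply pow2_ge_0. }
      nra. }
    eapply Rle_trans. apply zs_le. apply Hn. rewrite zs_plus, !zs_scal.
    assert (HQs : zs Q lo len <= A2 * U1).
    { unfold Q. rewrite (zs_swap (fun n j => A (n - j)%Z ^ 2 * Cmod (u j))).
      eapply Rle_trans. apply zs_le. intros j.
      2: { rewrite zs_scal. apply Rmult_le_compat_l. lra. apply (HU jlo jl). }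
      cbv beta. rewrite (zs_ext _ (fun n => Cmod (u j) * A (n - j)%Z ^ 2)) by (intros; ring).
      rewrite zs_scal. rewrite Rmult_comm. apply Rmult_le_compat_r. apply Cmod_ge_0. apply HAs. }
    pose proof (HZ lo len).
    assert (0 <= 2 * C3 ^ 2 * U1) by (pose proof (pow2_ge_0 C3); nra).
    assert (0 <= 2 * C2 ^ 2 * Yb ^ 2) by (pose proof (pow2_ge_0 C2); pose proof (pow2_ge_0 Yb); nra).
    unfold CG.
    apply Rplus_le_compat. apply Rmult_le_compat_l; auto. apply Rmult_le_compat_l; auto. }
  assert (K := is_lim_seq_le _ (fun _ => CG) _ CG Hbd Hlim (is_lim_seq_const CG)).
  simpl in K. exact K.
Qed.

End G.

Lemma sumZ_ext a b : (forall n, a n = b n) -> sumZ_finite a -> sumZ_finite b.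
Proof. intros E H. unfold sumZ_finite in *. eapply ex_series_ext. 2: exact H. intros k. simpl. rewrite !E. reflexivity. Qed.

Lemma sumZ_le a b : (forall n, 0 <= a n <= b n) -> sumZ_finite b -> sumZ_finite a.
Proof.
  intros E H. unfold sumZ_finite in *. apply (@ex_series_le R_AbsRing R_CompleteNormedModule _ (fun k : nat => b (Z.of_nat k) + b (- Z.of_nat k - 1)%Z)). 2: exact H. intros k.
  change (norm ?x) with (Rabs x). pose proof (E (Z.of_nat k)). pose proof (E (- Z.of_nat k - 1)%Z).
  rewrite Rabs_pos_eq; lra.
Qed.

Lemma sumZ_plus a b : sumZ_finite a -> sumZ_finite b -> sumZ_finite (fun n => a n + b n).
Proof.
  intros Ha Hb. unfold sumZ_finite in *. eapply ex_series_ext. 2: exact (ex_series_plus _ _ Ha Hb).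
  intros k. change (plus ?x ?y) with (x + y). lra.
Qed.

Lemma sumZ_scal c a : sumZ_finite a -> sumZ_finite (fun n => c * a n).
Proof.
  intros Ha. unfold sumZ_finite in *. eapply ex_series_ext. 2: exact (ex_series_scal c _ Ha).
  intros k. change (scal ?x ?y) with (x * y). lra.
Qed.

Lemma exp_sq a x : (exp a * x) ^ 2 = exp (2 * a) * x ^ 2.
Proof. replace (2 * a) with (a + a) by ring. rewrite exp_plus. ring. Qed.

Lemma Rpower_jb n y : Rpower (jb n) y = exp (y * L n).
Proof. reflexivity. Qed.

Theorem theorem2 (p : bool) (m : nat) (alpha : R)
  (halpha : 0 <= alpha <= 1) (V : fseries)
  (hV : H true (- (INR m * alpha)) V) (u : fseries)
  (hu : dom_S p m V u) :
  H p (INR m * (2 - alpha)) u.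
Proof.
  destruct m as [|m'].
  { replace (INR 0 * (2 - alpha)) with (INR 0) by (simpl; ring). exact (proj1 hu). }
  set (m := S m') in *.
  assert (Hm : (1 <= m)%nat) by (unfold m; lia).
  set (M := INR m). set (s := M * alpha).
  assert (HM1 : 1 <= M) by (unfold M; apply (le_INR 1); auto).
  assert (Hs : 0 <= s <= INR m) by (unfold s; fold M; split; [apply Rmult_le_pos; lra | pose proof (Rmult_le_compat_l M alpha 1 ltac:(lra) ltac:(lra)); lra]).
  destruct hu as [[Hpar Hu] [g [Hg Hh]]].
  destruct hV as [_ hV].
  assert (hA : sumZ_finite (fun k => (exp (- s * L k) * Cmod (V k)) ^ 2)).
  { eapply sumZ_ext. 2: exact hV. intros n. cbv beta. rewrite Rpower_jb, exp_sq. f_equal. f_equal. unfold s, M. ring. }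
  assert (hB : sumZ_finite (fun j => (exp (INR m * L j) * Cmod (u j)) ^ 2)).
  { eapply sumZ_ext. 2: exact Hu. intros n. cbv beta. rewrite Rpower_jb, exp_sq. f_equal. f_equal. ring. }
  assert (GW := g_weighted m s V u g Hm Hs hA hB Hg).
  destruct Hh as [_ Hh].
  set (h := fun n => (D2m m u n + g n)%C) in *.
  assert (hH : sumZ_finite (fun n => Cmod (h n) ^ 2)).
  { eapply sumZ_ext. 2: exact Hh. intros n. cbv beta. rewrite Rmult_0_r, Rpower_O by apply jb_pos. rewrite Rmult_1_l. reflexivity. }
  split; [exact Hpar|].
  set (c4 := 4 ^ m).
  apply (sumZ_le _ (fun n => 2 * c4 ^ 2 * Cmod (h n) ^ 2 + 2 * c4 ^ 2 * (exp (- s * L n) * Cmod (g n)) ^ 2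
                              + (exp (INR m * L n) * Cmod (u n)) ^ 2)).
  2: { apply sumZ_plus. apply sumZ_plus. apply sumZ_scal; exact hH. apply sumZ_scal; exact GW. exact hB. }
  intros n. cbv beta. rewrite Rpower_jb.
  assert (Et : exp (2 * (M * (2 - alpha)) * L n) * Cmod (u n) ^ 2
               = (exp ((2 * M - s) * L n) * Cmod (u n)) ^ 2).
  { rewrite exp_sq. f_equal. f_equal. unfold s, M. ring. }
  rewrite Et. set (t := exp ((2 * M - s) * L n) * Cmod (u n)).
  assert (Ht0 : 0 <= t) by (unfold t; pose proof (exp_pos ((2 * M - s) * L n)); pose proof (Cmod_ge_0 (u n)); nra).
  pose proof (pow2_ge_0 (Cmod (h n))). pose proof (pow2_ge_0 (exp (- s * L n) * Cmod (g n))).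
  pose proof (pow2_ge_0 (exp (INR m * L n) * Cmod (u n))).
  assert (Hc4 : 0 <= c4) by (unfold c4; apply pow_le; lra).
  split. apply pow2_ge_0.
  destruct (Z.eq_dec n 0) as [->|Hn0].
  { assert (L0 : L 0 = 0) by (unfold L, jb; rewrite Rabs_R0, Rplus_0_r; apply ln_1).
    assert (0 <= 2 * c4 ^ 2 * Cmod (h 0%Z) ^ 2) by (apply Rmult_le_pos; [pose proof (pow2_ge_0 c4); lra | apply pow2_ge_0]).
    assert (0 <= 2 * c4 ^ 2 * (exp (- s * L 0) * Cmod (g 0%Z)) ^ 2) by (apply Rmult_le_pos; [pose proof (pow2_ge_0 c4); lra | apply pow2_ge_0]).
    assert (Et0 : t = exp (INR m * L 0) * Cmod (u 0%Z)) by (unfold t; rewrite L0, !Rmult_0_r; reflexivity).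
    rewrite Et0. lra. }
  set (r := (IZR n * PI) ^ (2 * m)).
  assert (HPI : 2 < PI) by (pose proof PI2_1; lra).
  assert (Habs : 1 <= Rabs (IZR n)).
  { rewrite <- abs_IZR. apply (IZR_le 1). lia. }
  assert (Hjb : jb n <= 2 * Rabs (IZR n * PI)).
  { unfold jb. rewrite Rabs_mult, (Rabs_pos_eq PI) by lra. nra. }
  assert (HE : exp (2 * M * L n) = jb n ^ (2 * m)).
  { rewrite <- Rpower_pow by apply jb_pos. rewrite Rpower_jb. f_equal. rewrite mult_INR. reflexivity. }
  assert (Hp : jb n ^ (2 * m) <= c4 * Rabs r).
  { eapply Rle_trans. apply pow_incr. split. apply Rlt_le, jb_pos. exact Hjb.
    rewrite Rpow_mult_distr. unfold c4, r. rewrite <- RPow_abs. replace (2 ^ (2 * m)) with (4 ^ m) by (rewrite pow_mult; f_equal; ring). lra. }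
  assert (HCD : Cmod (D2m m u n) = Rabs r * Cmod (u n)).
  { unfold D2m. rewrite Cmod_mult, Cmod_R. reflexivity. }
  assert (HD : Cmod (D2m m u n) <= Cmod (h n) + Cmod (g n)).
  { replace (D2m m u n) with (h n + - g n)%C by (unfold h; ring).
    eapply Rle_trans. apply Cmod_triangle. rewrite Cmod_opp. lra. }
  assert (Hw1 : exp (- s * L n) <= 1).
  { rewrite <- exp_0. apply exp_mono. pose proof (L_ge0 n). nra. }
  assert (Hw0 := exp_pos (- s * L n)).
  assert (Ht : t <= c4 * (Cmod (h n) + exp (- s * L n) * Cmod (g n))).
  { assert (E : t = exp (- s * L n) * (exp (2 * M * L n) * Cmod (u n))).
    { unfold t. rewrite <- Rmult_assoc, <- exp_plus. f_equal. f_equal. ring. }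
    rewrite E, HE.
    pose proof (Cmod_ge_0 (u n)). pose proof (Cmod_ge_0 (h n)). pose proof (Cmod_ge_0 (g n)).
    assert (S1 : jb n ^ (2 * m) * Cmod (u n) <= c4 * Cmod (D2m m u n)).
    { rewrite HCD, <- Rmult_assoc. apply Rmult_le_compat_r; auto. }
    assert (S2 : exp (- s * L n) * (jb n ^ (2 * m) * Cmod (u n)) <= exp (- s * L n) * (c4 * Cmod (D2m m u n)))
      by (apply Rmult_le_compat_l; lra).
    assert (S3 : exp (- s * L n) * Cmod (D2m m u n) <= Cmod (h n) + exp (- s * L n) * Cmod (g n)) by nra.
    nra. }
  assert (Hhg : 0 <= Cmod (h n) + exp (- s * L n) * Cmod (g n)).
  { pose proof (Cmod_ge_0 (h n)). pose proof (Cmod_ge_0 (g n)). nra. }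
  assert (Q1 : t ^ 2 <= (c4 * (Cmod (h n) + exp (- s * L n) * Cmod (g n))) ^ 2) by (apply pow_incr; lra).
  set (a := Cmod (h n)) in *. set (b := exp (- s * L n) * Cmod (g n)) in *.
  assert (Q2 : (c4 * (a + b)) ^ 2 <= 2 * c4 ^ 2 * a ^ 2 + 2 * c4 ^ 2 * b ^ 2).
  { pose proof (pow2_ge_0 (c4 * (a - b))). nra. }
  lra.
Qed.
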